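(* Let $\xi$ be an $(I,T)$-system with the stuttering property, let $P(S)$ be a property, and let $n\ge 0$. Then there is no bad state that is reachable in $n+1$ transitions but not reachable in any number $k\le n$ of transitions if and only if $I(S_1)$ is redundant in $$\exists S_0\cdots\exists S_n\,[\,I(S_0)\wedge I(S_1)\wedge T_{0,1}\wedge\dots\wedge T_{n,n+1}\wedge \neg P(S_{n+1})\,],$$ i.e. if and only if this formula is equivalent, as a Boolean function of $S_{n+1}$, to $\exists S_0\cdots\exists S_n\,[\,I(S_0)\wedge T_{0,1}\wedge\dots\wedge T_{n,n+1}\wedge \neg P(S_{n+1})\,]$.
   Context: An $(I,T)$-system is a transition system over a finite set $S$ of Boolean state variables, given by a propositional formula $I(S)$ (initial states) and a propositional formula $T(S,S')$ (transition relation), where $S'$ is a copy of $S$. A state is a complete assignment to $S$. A trace $(s_0,\dots,s_k)$ is valid if $I(s_0)=1$ and $T(s_i,s_{i+1})=1$ for $i=0,\dots,k-1$; then $s_k$ is reachable in $k$ transitions. The system has the stuttering property if $T(s,s)=1$ for every state $s$. A property is a propositional formula $P(S)$; a state $s$ is bad if $P(s)=0$ and good if $P(s)=1$. Notation: $S_j$ is a copy of the state variables for time frame $j$; $T_{j,j+1}$ denotes $T(S_j,S_{j+1})$; $I(S_0)$, $I(S_1)$ are copies of $I$ over $S_0$, $S_1$; $P(S_{n+1})$ is a copy of $P$ over $S_{n+1}$. A conjunct $A$ is redundant in $\exists W[A\wedge B]$ if $\exists W[A\wedge B]\equiv\exists W[B]$, where $\equiv$ means equality as Boolean functions of the free variables.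 *)

(* Defs.v *)
From mathcomp Require Import all_boot.
Set Implicit Arguments. Unset Strict Implicit. Unset Printing Implicit Defensive.

(* Propositional formulas are represented by the Boolean
   functions they denote: I : state -> bool, T : state -> state -> bool,
   P : state -> bool. *)
Definition state (V : finType) := {ffun V -> bool}.

(* A trace is given by a function tr : nat -> state, of which only
   tr 0, ..., tr k matter. *)
Definition valid_trace (V : finType) (I : state V -> bool)
  (T : state V -> state V -> bool) (tr : nat -> state V) (k : nat) : Prop :=
  I (tr 0) /\ (forall i, i < k -> T (tr i) (tr i.+1)).

Definition reachable_in (V : finType) (I : state V -> bool)
  (T : state V -> state V -> bool) (k : nat) (s : state V) : Prop :=
  exists tr : nat -> state V, valid_trace I T tr k /\ tr k = s.

Definition stuttering (V : finType) (T : state V -> state V -> bool) : Prop :=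
  forall s, T s s.

(* Denotation, as a Boolean function of S_{n+1} = s, of
   exists S_0 .. S_n [ I(S_0) /\ T_{0,1} /\ ... /\ T_{n,n+1} /\ ~P(S_{n+1}) ] *)
Definition formula_without_I1 (V : finType) (I : state V -> bool)
  (T : state V -> state V -> bool) (P : state V -> bool) (n : nat)
  (s : state V) : Prop :=
  exists tr : nat -> state V, tr n.+1 = s /\
    I (tr 0) /\ (forall i, i < n.+1 -> T (tr i) (tr i.+1)) /\ ~~ P (tr n.+1).

(* Denotation of
   exists S_0 .. S_n [ I(S_0) /\ I(S_1) /\ T_{0,1} /\ ... /\ T_{n,n+1} /\ ~P(S_{n+1}) ] *)
Definition formula_with_I1 (V : finType) (I : state V -> bool)
  (T : state V -> state V -> bool) (P : state V -> bool) (n : nat)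
  (s : state V) : Prop :=
  exists tr : nat -> state V, tr n.+1 = s /\
    I (tr 0) /\ I (tr 1) /\ (forall i, i < n.+1 -> T (tr i) (tr i.+1)) /\
    ~~ P (tr n.+1).

Definition I1_redundant (V : finType) (I : state V -> bool)
  (T : state V -> state V -> bool) (P : state V -> bool) (n : nat) : Prop :=
  forall s : state V, formula_with_I1 I T P n s <-> formula_without_I1 I T P n s.

(* Main.v *)
Require Import Defs.
From mathcomp Require Import all_boot.
From Stdlib Require Import Classical_Prop.

Theorem proposition2 (V : finType) (I : state V -> bool)
  (T : state V -> state V -> bool) (P : state V -> bool) (n : nat) :
  stuttering T ->
  ((~ exists s : state V, ~~ P s /\ reachable_in I T n.+1 s /\
        (forall k, k <= n -> ~ reachable_in I T k s))
   <-> I1_redundant I T P n).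
Proof.
move=> Hst; split.
- move=> Hno s; split.
  + by case=> tr [e [I0 [_ [HT HP]]]]; exists tr.
  + case=> tr [e [I0 [HT HP]]].
    have [k [Hk Hr]] : exists k, k <= n /\ reachable_in I T k s.
      apply: Classical_Prop.NNPP => Hc; apply: Hno; exists s; split.
        by rewrite -e.
      split; first by exists tr; split => //; split.
      by move=> k Hk Hr; apply: Hc; exists k.
    case: Hr => tr' [[I0' HT'] e'].
    exists (fun i => tr' (minn i.-1 k)); split.
      by rewrite /= (minn_idPr Hk).
    split; first by rewrite /= min0n.
    split; first by rewrite /= min0n.
    split.
      move=> [|i] Hi /=; first by rewrite min0n; apply: Hst.
      case: (ltnP i k) => Hik; rewrite -/(minn i k) -/(minn i.+1 k).
        by rewrite (minn_idPl Hik); apply: HT'.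
      by rewrite (minn_idPr (leqW Hik)); apply: Hst.
    by rewrite /= (minn_idPr Hk) e' -e.
- move=> Hred [s [Hb [[tr [[I0 HT] e]] Hnot]]].
  have Hw : formula_without_I1 I T P n s.
    by exists tr; split => //; split => //; split => //; rewrite e.
  case/Hred: Hw => tr' [e' [_ [I1 [HT' _]]]].
  apply: (Hnot n (leqnn n)).
  exists (fun i => tr' i.+1); split => //; split => //.
  by move=> i Hi; apply: HT'.
Qed.
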